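(* Let $\mathbb{M}$ and $\mathbb{M}'$ be partial groups and let $F\colon\mathbb{M}\times\Delta[m]\to\mathbb{M}'$ be a simplicial map. Then $F$ is completely determined by: (i) the maps $f_i=F|_{\mathbb{M}\times\{\bullet_i\}}\colon\mathbb{M}\to\mathbb{M}'$ for $i=0,\dots,m$; and (ii) the elements $[\eta_k]=F(v_{\mathbb{M}},\iota_k)\in\mathbb{M}'_1$ for $k=1,\dots,m$.
   Context: Partial groups are regarded as simplicial sets: the $n$-simplices of $\mathbb{M}$ are the words $[x_1|\dots|x_n]$ in the domain of the partial product, with $d_0$ deleting $x_1$, $d_n$ deleting $x_n$, $d_i$ ($0<i<n$) replacing $x_i,x_{i+1}$ by $x_ix_{i+1}$, and $s_i$ inserting $1$ in position $i+1$; $v_{\mathbb{M}}$ denotes the unique vertex of $\mathbb{M}$. $\Delta[m]$ is the nerve of the poset $\bullet_0\to\bullet_1\to\dots\to\bullet_m$; $\bullet_0,\dots,\bullet_m$ are its vertices and $\iota_k\colon\bullet_{k-1}\to\bullet_k$ ($k=1,\dots,m$) its non-degenerate edges between consecutive vertices. *)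

(* Defs.v *)
From mathcomp Require Import all_boot.
Set Implicit Arguments. Unset Strict Implicit. Unset Printing Implicit Defensive.

(** Partial groups in the sense of Chermak.  Words are [seq T]; [pg_D] is the
    domain of the partial product [pg_prod] (a total function, meaningful on
    [pg_D] only); [pg_inv] is the inversion. *)
Record partial_group := PartialGroup {
  pg_T :> Type;
  pg_D : seq pg_T -> Prop;
  pg_prod : seq pg_T -> pg_T;
  pg_inv : pg_T -> pg_T;
  pg_single : forall x, pg_D [:: x];
  pg_sub : forall u v, pg_D (u ++ v) -> pg_D u /\ pg_D v;
  pg_prod1 : forall x, pg_prod [:: x] = x;
  pg_assoc : forall u v w, pg_D (u ++ v ++ w) ->
      pg_D (u ++ pg_prod v :: w) /\
      pg_prod (u ++ v ++ w) = pg_prod (u ++ pg_prod v :: w);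
  pg_invK : forall x, pg_inv (pg_inv x) = x;
  pg_invP : forall u, pg_D u ->
      pg_D (rev (map pg_inv u) ++ u) /\
      pg_prod (rev (map pg_inv u) ++ u) = pg_prod [::]
}.

Arguments pg_D p _ : clear implicits.
Arguments pg_prod p _ : clear implicits.
Arguments pg_inv p _ : clear implicits.

Section PartialGroupNerve.
Variable M : partial_group.

Definition pg_one : M := pg_prod M [::].

Definition pg_simplex (n : nat) (w : seq M) : Prop := pg_D M w /\ size w = n.

(** face d_i on an n-simplex [x_1|...|x_n] (0 <= i <= n, n >= 1):
    d_0 deletes x_1, d_n deletes x_n, d_i replaces x_i,x_(i+1) by x_i x_(i+1) *)
Definition pg_face (n i : nat) (w : seq M) : seq M :=
  if i == 0 then behead w
  else if i == n then take n.-1 w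
  else take i.-1 w ++ pg_prod M (take 2 (drop i.-1 w)) :: drop i.+1 w.

Definition pg_degen (i : nat) (w : seq M) : seq M :=
  take i w ++ pg_one :: drop i w.

Definition pg_vertex : seq M := [::].
End PartialGroupNerve.

Definition delta_simplex (m n : nat) (a : seq nat) : Prop :=
  size a = n.+1 /\ sorted leq a /\ all (fun k => k <= m) a.

Definition delta_face (i : nat) (a : seq nat) : seq nat := take i a ++ drop i.+1 a.
Definition delta_degen (i : nat) (a : seq nat) : seq nat := take i.+1 a ++ drop i a.

Definition delta_vertex (n k : nat) : seq nat := nseq n.+1 k.
Definition delta_iota (k : nat) : seq nat := [:: k.-1; k].

Definition prod_simplex (M : partial_group) (m n : nat) (w : seq M) (a : seq nat) :=
  pg_simplex n w /\ delta_simplex m n a.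

(** A simplicial map F : M x Delta[m] -> M', given by its components
    F n : (M x Delta[m])_n -> M'_n (only their values on genuine simplices
    matter), commuting with all faces and degeneracies. *)
Definition simplicial_map_prod (M M' : partial_group) (m : nat)
    (F : nat -> seq M -> seq nat -> seq M') : Prop :=
  [/\ (forall n w a, prod_simplex m n w a -> pg_simplex n (F n w a)),
      (forall n w a i, prod_simplex m n.+1 w a -> i <= n.+1 ->
         F n (pg_face n.+1 i w) (delta_face i a) = pg_face n.+1 i (F n.+1 w a)) &
      (forall n w a i, prod_simplex m n w a -> i <= n ->
         F n.+1 (pg_degen i w) (delta_degen i a) = pg_degen i (F n w a))].

(* Main.v *)
Require Import Defs.
From mathcomp Require Import all_boot zify.

Lemma Dx1 (M : partial_group) (x : M) :
  pg_D M [:: x; pg_one M] /\ pg_prod M [:: x; pg_one M] = x.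
Proof.
have := @pg_assoc M [:: x] [::] [::]; rewrite /= => H.
case: (H (pg_single x)) => H1 H2; split; first exact H1.
by rewrite /pg_one -H2 pg_prod1.
Qed.

Lemma spine (T : Type) n (u v : seq T) : size u = n.+2 -> size v = n.+2 ->
  behead u = behead v -> take n.+1 u = take n.+1 v -> u = v.
Proof.
case: u => [|x u]; case: v => [|y v] //= _ _ -> [->] //.
Qed.

Lemma all_take (T : Type) (p : pred T) n (s : seq T) : all p s -> all p (take n s).
Proof. by rewrite -{1}(cat_take_drop n s) all_cat => /andP[]. Qed.

Lemma face0_ps (M : partial_group) m n (w : seq M) a :
  prod_simplex m n.+1 w a -> prod_simplex m n (pg_face n.+1 0 w) (delta_face 0 a).
Proof.
case: w => [|x w]; first by case=> [[_ ]].
case: a => [|a0 a]; first by case=> _ [].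
case=> [[HD [Hs]]] [[Ha] [Hso Hall]].
rewrite /pg_face /delta_face /= drop0; split.
  split=> //; exact: (proj2 (@pg_sub M [:: x] w HD)).
split=> //; split; first exact: path_sorted Hso.
by move: Hall => /= /andP[].
Qed.

Lemma facen_ps (M : partial_group) m n (w : seq M) a :
  prod_simplex m n.+1 w a -> prod_simplex m n (pg_face n.+1 n.+1 w) (delta_face n.+1 a).
Proof.
case=> [[HD Hs]] [Ha [Hso Hall]].
rewrite /pg_face /delta_face /= eqxx drop_oversize ?Ha // cats0; split.
  split; last by rewrite size_take Hs ltnSn.
  by have := @pg_sub M (take n w) (drop n w); rewrite cat_take_drop => /(_ HD) [].
split; first by rewrite size_take Ha ltnSn.
by split; [exact: take_sorted | exact: all_take].
Qed.

Section Main.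
Variables (M M' : partial_group) (m : nat)
    (F G : nat -> seq M -> seq nat -> seq M').
Hypotheses (HF : simplicial_map_prod m F) (HG : simplicial_map_prod m G).

Lemma faces_det n w a : prod_simplex m n.+2 w a ->
  F n.+1 (pg_face n.+2 0 w) (delta_face 0 a) = G n.+1 (pg_face n.+2 0 w) (delta_face 0 a) ->
  F n.+1 (pg_face n.+2 n.+2 w) (delta_face n.+2 a) =
    G n.+1 (pg_face n.+2 n.+2 w) (delta_face n.+2 a) ->
  F n.+2 w a = G n.+2 w a.
Proof.
case: HF => F1 F2 _; case: HG => G1 G2 _ ps.
rewrite F2 // G2 // F2 // G2 // /pg_face /= eqxx => E0 En.
apply: (@spine _ n) => //.
- by case: (F1 _ _ _ ps).
- by case: (G1 _ _ _ ps).
Qed.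

Lemma two_step (x y : M) a0 a1 a2 : pg_D M [:: x; y] -> a0 <= a1 -> a1 <= a2 -> a2 <= m ->
  F 1 [:: y] [:: a1; a2] = G 1 [:: y] [:: a1; a2] ->
  F 1 [:: x] [:: a0; a1] = G 1 [:: x] [:: a0; a1] ->
  F 1 [:: pg_prod M [:: x; y]] [:: a0; a2] = G 1 [:: pg_prod M [:: x; y]] [:: a0; a2].
Proof.
move=> HD h01 h12 h2 E1 E0.
have ps : prod_simplex m 2 [:: x; y] [:: a0; a1; a2].
  split; first by split.
  split=> //; split; first by rewrite /= h01 h12.
  by rewrite /= h2 (leq_trans h12 h2) (leq_trans h01 (leq_trans h12 h2)).
have E : F 2 [:: x; y] [:: a0; a1; a2] = G 2 [:: x; y] [:: a0; a1; a2].
  by apply: (@faces_det 0).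
case: HF => _ F2 _; case: HG => _ G2 _.
have := F2 1 _ _ 1 ps isT; have := G2 1 _ _ 1 ps isT.
by rewrite /= E => -> ->.
Qed.

Hypothesis Hv : forall i, i <= m -> forall n w, pg_simplex n w ->
     F n w (delta_vertex n i) = G n w (delta_vertex n i).
Hypothesis Hi : forall k, 1 <= k <= m ->
     F 1 (pg_degen 0 (pg_vertex M)) (delta_iota k) =
     G 1 (pg_degen 0 (pg_vertex M)) (delta_iota k).

Lemma E1 d a0 : a0 + d <= m ->
  F 1 [:: pg_one M] [:: a0; a0 + d] = G 1 [:: pg_one M] [:: a0; a0 + d].
Proof.
elim: d a0 => [|d IH] a0 h.
  rewrite addn0 in h *.
  have P : pg_simplex 1 [:: pg_one M] by split=> //; exact: pg_single.
  exact (Hv a0 h 1 _ P).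
case: d IH h => [|d] IH h.
  rewrite addn1 in h *; by apply: (Hi a0.+1).
have [HD Hp] := @Dx1 M (pg_one M).
rewrite -{1}Hp -{3}Hp.
apply: (two_step (pg_one M) (pg_one M) a0 a0.+1) => //.
- lia.
- by rewrite addnS -addSn; apply: IH; rewrite addSn -addnS.
- apply: (Hi a0.+1); apply/andP; split=> //.
  lia.
Qed.

Lemma edge (x : M) a0 a1 : a0 <= a1 -> a1 <= m ->
  F 1 [:: x] [:: a0; a1] = G 1 [:: x] [:: a0; a1].
Proof.
move=> h01 h1.
have [HD Hp] := @Dx1 M x.
rewrite -{1}Hp -{2}Hp.
apply: (two_step x (pg_one M) a0 a0 a1) => //.
- have := @E1 (a1 - a0) a0; rewrite subnKC //; apply; exact: h1.
- have P : pg_simplex 1 [:: x] by split=> //; exact: pg_single.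
  exact (Hv a0 (leq_trans h01 h1) 1 _ P).
Qed.

Lemma mainl n : forall w a, prod_simplex m n w a -> F n w a = G n w a.
Proof.
elim/ltn_ind: n => -[|[|n]] IH w a ps.
- case: HF => F1 _ _; case: HG => G1 _ _.
  case: (F1 _ _ _ ps) => _ /size0nil ->; case: (G1 _ _ _ ps) => _ /size0nil -> //.
- case: ps => [[_ Hw]] [Ha [Hso Hall]].
  case: w Hw => [|x [|]] // _.
  case: a Ha Hso Hall => [|a0 [|a1 [|]]] // _ /= /andP[h01 _] /and3P[_ h1 _].
  exact: edge.
- apply: faces_det => //.
  + exact: (IH n.+1 (ltnSn _) _ _ (@face0_ps _ _ _ _ _ ps)).
  + exact: (IH n.+1 (ltnSn _) _ _ (@facen_ps _ _ _ _ _ ps)).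
Qed.
End Main.

Theorem proposition5p2 (M M' : partial_group) (m : nat)
    (F G : nat -> seq M -> seq nat -> seq M') :
  simplicial_map_prod m F -> simplicial_map_prod m G ->
  (forall i, i <= m -> forall n w, pg_simplex n w ->
     F n w (delta_vertex n i) = G n w (delta_vertex n i)) ->
  (forall k, 1 <= k <= m ->
     F 1 (pg_degen 0 (pg_vertex M)) (delta_iota k) =
     G 1 (pg_degen 0 (pg_vertex M)) (delta_iota k)) ->
  forall n w a, prod_simplex m n w a -> F n w a = G n w a.
Proof.
move=> HF HG Hv Hi n w a ps; exact: (@mainl M M' m F G HF HG Hv Hi n w a ps).
Qed.
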